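(* Let $0<\beta<1$, $p=\lceil\beta^{-1}\rceil-1$, and let $G$ be a graph of order $n$ with minimum degree $(1-\beta)n$. Then for all integers $2\le t<s\le p+1$ and every $S\in\mathcal{K}_s$, $$\Phi_t^s(S)\ \ge\ (1-t\beta)\frac{s!}{t!}+\big(D_-(S)-(1-s\beta)\big)\frac{(s-2)!}{(t-2)!}.$$ In particular, for $2\le t\le p$, $$\sum_{S\in\mathcal{K}_{p+1}}\Phi_t^{p+1}(S)\ \ge\ \left((1-t\beta)\frac{(p+1)!}{t!}-(1-(p+1)\beta)\frac{(p-1)!}{(t-2)!}\right)k_{p+1}.$$
   Context: All graphs are finite and simple. For a graph $G$, $\mathcal{K}_t$ is the set of $t$-cliques (identified with vertex sets), $k_t=|\mathcal{K}_t|$, and $\mathcal{K}_t(S)$ is the set of $t$-cliques contained in a clique $S$. The degree $d(T)$ of a clique $T$ is the number of cliques with one more vertex containing $T$, and $D(T)=d(T)/n$. With $p=\lceil\beta^{-1}\rceil-1$, for $T\in\mathcal{K}_t$, $1\le t\le p+1$, $D_-(T)=\min\{D(T),(p-t+1)\beta\}$. For integers $2\le t\le s\le p+1$ define $\phi_t^s:\mathcal{K}_s\to\mathbb{R}$ recursively by $\phi_t^t(S)=D_-(S)$ and $\phi_t^s(S)=\sum_{U\in\mathcal{K}_{s-1}(S)}\phi_t^{s-1}(U)$ for $s>t$; set $\varphi_t^s=(1-t\beta)\frac{s!}{t!}+((p+1)\beta-1)\frac{(s-2)!}{(t-2)!}$ and $\Phi_t^s(S)=\min\{\phi_t^s(S),\varphi_t^s\}$.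 *)

(* Defs.v *)
From HB Require Import structures.
From mathcomp Require Import all_boot all_order all_algebra.
Set Implicit Arguments. Unset Strict Implicit. Unset Printing Implicit Defensive.
Import Order.TTheory GRing.Theory Num.Theory.
Local Open Scope ring_scope.

Definition simple_graph (T : finType) (e : rel T) : Prop :=
  symmetric e /\ irreflexive e.

Definition is_clique (T : finType) (e : rel T) (S : {set T}) : bool :=
  [forall x in S, forall y in S, (x != y) ==> e x y].

Definition cliques (T : finType) (e : rel T) (t : nat) : {set {set T}} :=
  [set S : {set T} | is_clique e S && (#|S| == t)%N].

Definition cliques_in (T : finType) (e : rel T) (t : nat) (S : {set T})
  : {set {set T}} := [set U in cliques e t | U \subset S].

Definition vdeg (T : finType) (e : rel T) (v : T) : nat := #|[set w | e v w]|.

Definition cdeg (T : finType) (e : rel T) (S : {set T}) : nat :=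
  #|[set U in cliques e (#|S|.+1) | S \subset U]|.

Definition Dn (R : realFieldType) (T : finType) (e : rel T) (S : {set T}) : R :=
  (cdeg e S)%:R / (#|T|)%:R.

Definition Dminus (R : realFieldType) (T : finType) (e : rel T)
  (beta : R) (p : nat) (S : {set T}) : R :=
  Num.min (Dn R e S) ((p%:R - (#|S|)%:R + 1) * beta).

(* phi_rec t k S = phi_t^{t+k}(S) *)
Fixpoint phi_rec (R : realFieldType) (T : finType) (e : rel T)
  (beta : R) (p t k : nat) (S : {set T}) : R :=
  match k with
  | 0 => Dminus e beta p S
  | k'.+1 => \sum_(U in cliques_in e (t + k') S) phi_rec e beta p t k' U
  end.

Definition phi (R : realFieldType) (T : finType) (e : rel T)
  (beta : R) (p t s : nat) (S : {set T}) : R :=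
  phi_rec e beta p t (s - t) S.

Definition varphi (R : realFieldType) (beta : R) (p t s : nat) : R :=
  (1 - t%:R * beta) * ((s`!)%:R / (t`!)%:R)
  + ((p.+1)%:R * beta - 1) * (((s - 2)`!)%:R / ((t - 2)`!)%:R).

Definition Phi (R : realFieldType) (T : finType) (e : rel T)
  (beta : R) (p t s : nat) (S : {set T}) : R :=
  Num.min (phi e beta p t s S) (varphi beta p t s).

(* Main.v *)
Require Import Defs.
From HB Require Import structures.
From mathcomp Require Import all_boot all_order all_algebra.
From Stdlib Require Import Ring.
Set Implicit Arguments. Unset Strict Implicit. Unset Printing Implicit Defensive.
Import Order.TTheory GRing.Theory Num.Theory.

Section Graph.
Variable T : finType.
Variable e : rel T.
Hypothesis esym : symmetric e.
Hypothesis eirr : irreflexive e.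
Implicit Types S U : {set T}.

Definition cn (S : {set T}) : {set T} := [set w | [forall x in S, e x w]].
Definition nadj (v : T) : {set T} := [set w | ~~ e v w].

Lemma in_cn S w : (w \in cn S) = [forall x in S, e x w].
Proof. by rewrite inE. Qed.

Lemma cnP (S : {set T}) w : reflect (forall x, x \in S -> e x w) (w \in cn S).
Proof. rewrite in_cn; apply: (iffP forall_inP) => //. Qed.

Lemma cn_notin S w : w \in cn S -> w \notin S.
Proof. move/cnP=> H; apply/negP => /H; by rewrite eirr. Qed.

Lemma cliqueP S : reflect (forall x y, x \in S -> y \in S -> x != y -> e x y) (is_clique e S).
Proof.
apply: (iffP forall_inP) => [H x y xS yS xy | H x xS].
  by have /forall_inP/(_ y yS)/implyP := H x xS; apply.
by apply/forall_inP => y yS; apply/implyP; apply: H.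
Qed.

Lemma clique_sub S U : U \subset S -> is_clique e S -> is_clique e U.
Proof.
move=> /subsetP sUS /cliqueP H; apply/cliqueP => x y xU yU; apply: H; exact: sUS.
Qed.

Lemma cdeg_cn S : is_clique e S -> cdeg e S = #|cn S|.
Proof.
move=> cS; rewrite /cdeg.
have -> : [set U in cliques e #|S|.+1 | S \subset U] = [set w |: S | w in cn S].
  apply/setP => U; rewrite !inE; apply/andP/imsetP.
  - case=> /andP [cU /eqP cardU] sSU.
    have : #|U :\: S| == 1.
      by rewrite cardsD (setIidPr sSU) cardU subSn // subnn.
    case/cards1P => w Hw.
    have wU : w \in U :\: S by rewrite Hw set11.
    move: (wU); rewrite inE => /andP [wS wU'].
    exists w.
      apply/cnP => x xS; move/cliqueP: cU; apply => //; first by apply: (subsetP sSU).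
      by apply: contraNneq wS => <-.
    apply/setP => y; rewrite !inE; apply/idP/idP.
      move=> yU; case yS: (y \in S); first by rewrite orbT.
      have : y \in U :\: S by rewrite inE yS.
      by rewrite Hw inE => ->.
    by case/orP => [/eqP -> //| ]; apply: (subsetP sSU).
  - case=> w wcn ->; split; last exact: subsetUr.
    have wS := cn_notin wcn.
    rewrite cardsU1 wS add1n eqxx andbT.
    apply/cliqueP => x y; rewrite !inE => /orP [/eqP-> | xS] /orP [/eqP-> | yS] xy.
    + by rewrite eqxx in xy.
    + by rewrite esym; move/cnP: wcn; apply.
    + by move/cnP: wcn; apply.
    + by move/cliqueP: cS; apply.
rewrite card_in_imset // => w w' wc w'c Hww.
have : w \in w' |: S by rewrite -Hww setU11.
rewrite !inE; case/orP; first by move/eqP.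
by move=> wS; move: (cn_notin wc); rewrite wS.
Qed.

Lemma cn_sub S v : v \in S -> cn (S :\ v) \subset cn S :|: nadj v.
Proof.
move=> vS; apply/subsetP => w /cnP H; rewrite !inE.
case evw: (e v w); last by rewrite orbT.
rewrite orbF; apply/forall_inP => x xS.
case: (eqVneq x v) => [-> // | xv]; apply: H; by rewrite !inE xv xS.
Qed.

Lemma card_cn_sub S v : v \in S -> #|cn (S :\ v)| <= #|cn S| + #|nadj v|.
Proof.
move=> vS; apply: leq_trans (subset_leq_card (cn_sub vS)) _; exact: leq_card_setU.
Qed.

Lemma sum_ind (A : {set T}) : \sum_(w : T) (w \in A : nat) = #|A|.
Proof. by rewrite -sum1_card [RHS]big_mkcond; apply: eq_bigr => w _; case: (w \in A). Qed.

Lemma sum_aff (a c : nat) (f : T -> nat) : \sum_w (a * f w + c) = a * \sum_w f w + c * #|T|.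
Proof. rewrite big_split /= sum_nat_const mulnC; congr (_ + _); rewrite big_distrr. done. Qed.

Lemma exch (S : {set T}) (X : T -> {set T}) :
  \sum_(w : T) \sum_(v in S) (w \in X v : nat) = \sum_(v in S) #|X v|.
Proof. rewrite exchange_big; apply: eq_bigr => v _; exact: sum_ind. Qed.

Lemma cn_lower U : #|T| <= #|cn U| + \sum_(u in U) #|nadj u|.
Proof.
rewrite -exch -sum_ind -sum1_card -big_split /=; apply: leq_sum => w _.
case wc: (w \in cn U) => //.
move/negbT: wc; rewrite in_cn negb_forall_in => /exists_inP [u uU neu].
rewrite add0n (bigD1 u) //= inE neu; exact: leq_addr.
Qed.

Lemma cn_double S : is_clique e S -> 2 <= #|S| ->
  (#|S| - 2) * #|cn S| + 2 * #|T| <=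
  \sum_(v in S) #|cn (S :\ v)| + \sum_(v in S) #|nadj v|.
Proof.
move=> cS s2.
suff H : forall w, (#|S| - 2) * (w \in cn S) + 2 <= \sum_(v in S) (w \in cn (S :\ v) : nat) + \sum_(v in S) (w \in nadj v : nat).
  rewrite -!exch -(sum_ind (cn S)) -sum_aff -big_split /=.
  by apply: leq_sum => w _; exact: H.
move=> w.
case wc: (w \in cn S) => /=.
  rewrite muln1 (eq_bigr (fun _ => 1)); last first.
    move=> v vS; apply/eqP; rewrite eqb1; apply/cnP => x; rewrite inE => /andP [_ xS].
    by move/cnP: wc; apply.
  by rewrite sum1_card subnK // leq_addr.
rewrite muln0 add0n.
set B := [set v in S | ~~ e v w].
have HB : \sum_(v in S) (w \in nadj v : nat) = #|B|.
  rewrite -sum1_card big_mkcond [RHS]big_mkcond /=.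
  by apply: eq_bigr => v _; rewrite !inE; case: (v \in S); case: (e v w).
rewrite HB.
have : 0 < #|B|.
  move/negbT: wc; rewrite in_cn negb_forall_in => /exists_inP [u uU neu].
  by apply/card_gt0P; exists u; rewrite inE uU.
rewrite leq_eqVlt => /orP [/eqP B1 | ]; last first.
  by move=> HB2; apply: leq_trans HB2 (leq_addl _ _).
move/(@Logic.eq_sym nat)/eqP: (B1); case/cards1P => v0 Hv0.
have v0B : v0 \in B by rewrite Hv0 set11.
move: (v0B); rewrite inE => /andP [v0S _].
rewrite -B1 (bigD1 v0) //=.
have -> : w \in cn (S :\ v0).
  apply/cnP => x; rewrite !inE => /andP [xv0 xS].
  apply/negPn/negP => nexw.
  have : x \in B by rewrite inE xS nexw.
  by rewrite Hv0 inE (negbTE xv0).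
by rewrite addn1 ltnS leq_addr.
Qed.

End Graph.

Local Open Scope ring_scope.

Section Real.
Variable R : archiRealFieldType.
Lemma radd_ex : {f : R -> R -> R | f = +%R}. Proof. by exists +%R. Qed.
Lemma rmul_ex : {f : R -> R -> R | f = *%R}. Proof. by exists *%R. Qed.
Lemma ropp_ex : {f : R -> R | f = -%R}. Proof. by exists -%R. Qed.
Lemma rzero_ex : {f : R | f = 0}. Proof. by exists 0. Qed.
Lemma rone_ex : {f : R | f = 1}. Proof. by exists 1. Qed.
Definition radd := proj1_sig radd_ex.
Definition rmul := proj1_sig rmul_ex.
Definition ropp := proj1_sig ropp_ex.
Definition rzero := proj1_sig rzero_ex.
Definition rone := proj1_sig rone_ex.
Definition rsub (x y : R) : R := radd x (ropp y).
Lemma raddE : radd = +%R. Proof. rewrite /radd /rmul /ropp /rzero /rone; match goal with |- proj1_sig ?p = _ => exact: (proj2_sig p) end. Qed.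
Lemma rmulE : rmul = *%R. Proof. rewrite /radd /rmul /ropp /rzero /rone; match goal with |- proj1_sig ?p = _ => exact: (proj2_sig p) end. Qed.
Lemma roppE : ropp = -%R. Proof. rewrite /radd /rmul /ropp /rzero /rone; match goal with |- proj1_sig ?p = _ => exact: (proj2_sig p) end. Qed.
Lemma rzeroE : rzero = 0. Proof. rewrite /radd /rmul /ropp /rzero /rone; match goal with |- proj1_sig ?p = _ => exact: (proj2_sig p) end. Qed.
Lemma roneE : rone = 1. Proof. rewrite /radd /rmul /ropp /rzero /rone; match goal with |- proj1_sig ?p = _ => exact: (proj2_sig p) end. Qed.
Lemma RT : @ring_theory R rzero rone radd rmul rsub ropp eq.
Proof. split=> *; rewrite /rsub ?raddE ?rmulE ?roppE ?rzeroE ?roneE; [exact: add0r|exact: addrC|exact: addrA|exact: mul1r|exact: mulrC|exact: mulrA|exact: mulrDl|done|exact: subrr]. Qed.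
Ltac myconst t := match t with | rzero => constr:(BinNums.Z0) | rone => constr:(BinNums.Zpos BinNums.xH) | _ => constr:(InitialRing.NotConstant) end.
Add Ring Rr : RT (constants [myconst]).
Lemma fadd (x y : R) : x + y = radd x y. Proof. by rewrite raddE. Qed.
Lemma fmul (x y : R) : x * y = rmul x y. Proof. by rewrite rmulE. Qed.
Lemma fopp (x : R) : - x = ropp x. Proof. by rewrite roppE. Qed.
Lemma f0 : 0 = rzero :> R. Proof. by rewrite rzeroE. Qed.
Lemma f1 : 1 = rone :> R. Proof. by rewrite roneE. Qed.
Ltac gen_nat := repeat match goal with |- context [(?x *+ ?n)%R] => let y := fresh "y" in set y := (x *+ n)%R; clearbody y; change (Num.ArchiRealField.sort R) in y end.
Lemma f2 : 2%:R = 1 + 1 :> R. Proof. by rewrite mulr2n. Qed.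
Ltac myring := rewrite ?f2; gen_nat; rewrite ?fadd ?fmul ?fopp ?f0 ?f1; match goal with |- @eq _ ?a ?b => change (@eq R a b) end; ring.

Lemma le_by (A B E : R) : B - A = E -> 0 <= E -> A <= B.
Proof. by move=> <-; rewrite subr_ge0. Qed.

Lemma split_sum (T : finType) (S : {set T}) (P : pred T) (g : T -> R) :
  \sum_(v in S) g v = \sum_(v in S :&: [set v | P v]) g v + \sum_(v in S :\: [set v | P v]) g v.
Proof.
rewrite (bigID P) /=; congr (_ + _); apply: eq_bigl => v; rewrite !inE //.
by rewrite andbC.
Qed.

Lemma absK (T : finType) (S : {set T}) (f : T -> R) (d C b : R) :
  (2 <= #|S|)%N ->
  (forall v, v \in S -> f v <= d + b) ->
  (#|S|%:R - 2) * d + 2 - #|S|%:R * b <= \sum_(v in S) f v ->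
  (forall v, v \in S -> 1 - (#|S|%:R - 1) * b <= f v) ->
  1 - (#|S|%:R - 1) * b <= C ->
  (#|S|%:R - 2) * Num.min d (C - b) + 2 - #|S|%:R * b <= \sum_(v in S) Num.min (f v) C.
Proof.
move=> s2 Hub Hsum Hlb HC.
set x := Num.min d (C - b).
have xd : x <= d by rewrite ge_min lexx.
have xC : x <= C - b by rewrite ge_min lexx orbT.
set P := [set v | C < f v].
have cP := cardsID P S.
rewrite (split_sum _ (fun v => C < f v)) -/P.
have -> : \sum_(v in S :&: P) Num.min (f v) C = C *+ #|S :&: P|.
  rewrite -sumr_const; apply: eq_bigr => v; rewrite !inE => /andP [_ H].
  by rewrite min_r // ltW.
have -> : \sum_(v in S :\: P) Num.min (f v) C = \sum_(v in S :\: P) f v.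
  apply: eq_bigr => v; rewrite !inE => /andP [H _].
  by rewrite min_l // leNgt.
set a := #|S :&: P|; set a' := #|S :\: P|.
have sE : #|S|%:R = a%:R + a'%:R :> R by rewrite -natrD cP.
case: (leqP (a.+2) #|S|) => Ha.
- have H1 : \sum_(v in S :&: P) f v <= (d + b) *+ a.
    rewrite -sumr_const; apply: ler_sum => v; rewrite inE => /andP [vS _]; exact: Hub.
  have H2 : \sum_(v in S) f v = \sum_(v in S :&: P) f v + \sum_(v in S :\: P) f v.
    by rewrite (split_sum _ (fun v => C < f v)).
  have Hs : 0 <= #|S|%:R - 2 - a%:R :> R.
    have -> : #|S|%:R - 2 - a%:R = (#|S| - a.+2)%:R :> R.
      by rewrite natrB // -[a.+2]addn2 natrD; myring.
    exact: ler0n.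
  apply: (@le_trans _ _ (C *+ a + (((#|S|%:R - 2) * d + 2 - #|S|%:R * b) - (d + b) *+ a))).
    apply: (le_by (E := a%:R * (C - b - x) + (#|S|%:R - 2 - a%:R) * (d - x))).
      rewrite -[C *+ _]mulr_natr -[(d + b) *+ _]mulr_natr; myring.
    apply: addr_ge0; apply: mulr_ge0 => //; by rewrite subr_ge0.
  rewrite lerD2l lerBlDr; apply: le_trans Hsum _.
  by rewrite H2 addrC lerD2l.
- have a'1 : (a' <= 1)%N.
    by move: Ha; rewrite -cP -/a -/a' -addn2 ltn_add2l.
  have H1 : (1 - (#|S|%:R - 1) * b) *+ a' <= \sum_(v in S :\: P) f v.
    rewrite -sumr_const; apply: ler_sum => v; rewrite inE => /andP [_ vS]; exact: Hlb.
  apply: le_trans (lerD (lexx _) H1).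
  have Hx : (#|S|%:R - 2) * x <= (#|S|%:R - 2) * (C - b).
    apply: ler_wpM2l => //; rewrite subr_ge0.
    by rewrite ler_nat.
  apply: le_trans (lerD (lerD Hx (lexx _)) (lexx _)) _.
  apply: (le_by (E := (2 - a'%:R) * (C - (1 - (#|S|%:R - 1) * b)))).
    by rewrite -[C *+ _]mulr_natr -[(1 - _) *+ _]mulr_natr sE; myring.
  apply: mulr_ge0; last by rewrite subr_ge0.
  rewrite subr_ge0 ler_nat; exact: leq_trans a'1 _.
Qed.

Variables (T : finType) (e : rel T) (beta : R) (p : nat).
Hypothesis esym : symmetric e.
Hypothesis eirr : irreflexive e.
Hypothesis hb : 0 < beta.
Hypothesis hp : 1 <= (p.+1)%:R * beta.
Hypothesis hdeg : forall v, (1 - beta) * #|T|%:R <= (vdeg e v)%:R.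
Hypothesis hn : (0 < #|T|)%N.
Implicit Types S U : {set T}.

Lemma nR_gt0 : 0 < #|T|%:R :> R. Proof. by rewrite ltr0n. Qed.

Lemma nadj_le v : #|nadj e v|%:R <= beta * #|T|%:R.
Proof.
have -> : nadj e v = ~: [set w | e v w] by apply/setP => w; rewrite !inE.
have := cardsC [set w | e v w]; move/(congr1 (fun n => n%:R : R)); rewrite natrD => HC.
have -> : #|~: [set w | e v w]|%:R = #|T|%:R - (vdeg e v)%:R :> R.
  by rewrite -HC /vdeg; myring.
apply: (le_by (E := (vdeg e v)%:R - (1 - beta) * #|T|%:R)); first by myring.
by rewrite subr_ge0.
Qed.

Lemma sum_nadj S : (\sum_(v in S) #|nadj e v|)%:R <= #|S|%:R * (beta * #|T|%:R) :> R.
Proof.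
rewrite natr_sum mulr_natl -sumr_const; apply: ler_sum => v _; exact: nadj_le.
Qed.

Lemma Dn_ge U : is_clique e U -> 1 - #|U|%:R * beta <= Dn R e U.
Proof.
move=> cU; rewrite /Dn ler_pdivlMr ?nR_gt0 // (cdeg_cn esym eirr cU).
have H := cn_lower e U; move: H; rewrite -(ler_nat R) natrD => H.
have H2 := sum_nadj U.
apply: (le_by (E := (#|cn e U|%:R + #|U|%:R * (beta * #|T|%:R) - #|T|%:R))); first by myring.
rewrite subr_ge0; apply: le_trans H _; exact: lerD.
Qed.

Lemma Dn_ge0 U : 0 <= Dn R e U.
Proof. by rewrite /Dn divr_ge0. Qed.

Lemma Dn_sub S v : is_clique e S -> v \in S -> Dn R e (S :\ v) <= Dn R e S + beta.
Proof.
move=> cS vS.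
have cSv : is_clique e (S :\ v) by apply: clique_sub cS; exact: subsetDl.
rewrite /Dn (cdeg_cn esym eirr cS) (cdeg_cn esym eirr cSv).
have H := card_cn_sub e vS; move: H; rewrite -(ler_nat R) natrD => H.
have H2 := nadj_le v.
rewrite ler_pdivrMr ?nR_gt0 //.
apply: le_trans H _.
have -> : (#|cn e S|%:R / #|T|%:R + beta) * #|T|%:R = #|cn e S|%:R + beta * #|T|%:R.
  rewrite mulrDl -mulrA mulVf ?mulr1 //; by rewrite pnatr_eq0 -lt0n.
exact: lerD.
Qed.

Lemma Dn_sum S : is_clique e S -> (2 <= #|S|)%N ->
  (#|S|%:R - 2) * Dn R e S + 2 - #|S|%:R * beta <= \sum_(v in S) Dn R e (S :\ v).
Proof.
move=> cS s2.
have H := cn_double cS s2; move: H; rewrite -(ler_nat R) !natrD !natrM natrB //.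
rewrite [X in _ <= X + _]natr_sum => H.
have H2 := sum_nadj S.
rewrite /Dn -mulr_suml (cdeg_cn esym eirr cS) ler_pdivlMr ?nR_gt0 //.
have -> : \sum_(i in S) (cdeg e (S :\ i))%:R = \sum_(v in S) #|cn e (S :\ v)|%:R :> R.
  apply: eq_bigr => v vS; rewrite (cdeg_cn esym eirr) //; apply: clique_sub cS; exact: subsetDl.
have nz : #|T|%:R != 0 :> R by rewrite pnatr_eq0 -lt0n.
set d := #|cn e S|%:R; set n := #|T|%:R.
set q := d / n.
have dE : d = q * n by rewrite /q divfK.
rewrite -/d -/n dE in H.
set X := \sum_(v in S) _. set Y := (\sum_(v in S) #|nadj e v|)%:R in H H2.
apply: (le_by (E := (X + Y - ((#|S|%:R - 2) * (q * n) + (n + (n + 0)))) + (#|S|%:R * (beta * n) - Y))).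
  by myring.
by apply: addr_ge0; rewrite subr_ge0.
Qed.

Lemma card_del S v : v \in S -> #|S :\ v| = #|S|.-1.
Proof. by move=> vS; rewrite (cardsD1 v S) vS. Qed.

Lemma natr_pred (n : nat) : (0 < n)%N -> (n.-1)%:R = n%:R - 1 :> R.
Proof. by move=> n0; rewrite -subn1 natrB. Qed.

Lemma key S : is_clique e S -> (2 <= #|S|)%N ->
  (#|S|%:R - 2) * Dminus e beta p S + 2 - #|S|%:R * beta <= \sum_(v in S) Dminus e beta p (S :\ v).
Proof.
move=> cS s2.
have s0 : (0 < #|S|)%N by apply: leq_trans s2.
have cSv : forall v, is_clique e (S :\ v) by move=> v; apply: clique_sub cS; exact: subsetDl.
rewrite (eq_bigr (fun v => Num.min (Dn R e (S :\ v)) ((p%:R - (#|S|%:R - 1) + 1) * beta))); last first.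
  by move=> v vS; rewrite /Dminus card_del // natr_pred.
have -> : Dminus e beta p S = Num.min (Dn R e S) ((p%:R - (#|S|%:R - 1) + 1) * beta - beta).
  by rewrite /Dminus; congr Num.min; myring.
apply: absK => //.
- by move=> v vS; exact: Dn_sub.
- exact: Dn_sum.
- by move=> v vS; have := Dn_ge (cSv v); rewrite card_del // natr_pred.
- apply: (le_by (E := p.+1%:R * beta - 1)); last by rewrite subr_ge0.
  by rewrite -natr1; myring.
Qed.

Lemma cliques_in_del S k : is_clique e S -> #|S| = k.+1 -> cliques_in e k S = [set S :\ v | v in S].
Proof.
move=> cS cardS; apply/setP => U; rewrite !inE; apply/andP/imsetP.
- case=> /andP [cU /eqP cU'] sUS.
  have : #|S :\: U| == 1%N.
    by rewrite cardsD (setIidPr sUS) cardS cU' subSn // subnn.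
  case/cards1P => v Hv.
  have vSU : v \in S :\: U by rewrite Hv set11.
  move: (vSU); rewrite inE => /andP [vU vS].
  exists v => //; apply/setP => w; rewrite !inE; apply/idP/idP.
    move=> wU; rewrite (subsetP sUS) // andbT; by apply: contraNneq vU => <-.
  case/andP => wv wS; apply/negPn/negP => wU.
  have : w \in S :\: U by rewrite inE wU.
  by rewrite Hv inE (negbTE wv).
- case=> v vS ->; split; last exact: subsetDl.
  rewrite card_del // cardS eqxx andbT; apply: clique_sub cS; exact: subsetDl.
Qed.

Lemma sum_del S k (g : {set T} -> R) : is_clique e S -> #|S| = k.+1 ->
  \sum_(U in cliques_in e k S) g U = \sum_(v in S) g (S :\ v).
Proof.
move=> cS cardS; rewrite cliques_in_del // big_imset //.
move=> v w vS wS Hvw; case: (eqVneq v w) => // vw.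
have : v \in S :\ w by rewrite !inE vw vS.
by rewrite -Hvw !inE eqxx.
Qed.

Lemma phi_bound t k S : (2 <= t)%N -> S \in cliques e (t + k) -> (t + k <= p.+1)%N ->
  (1 - t%:R * beta) * (((t + k)`!)%:R / (t`!)%:R)
  + (Dminus e beta p S - (1 - (t + k)%:R * beta)) * (((t + k - 2)`!)%:R / ((t - 2)`!)%:R)
  <= phi_rec e beta p t k S.
Proof.
move=> t2; elim: k S => [|k IH] S.
  rewrite addn0 /= => _ _.
  rewrite !divff ?pnatr_eq0 -?lt0n ?fact_gt0 // !mulr1 addrC subrK //.
move=> HS Hk.
have := HS; rewrite inE => /andP [cS /eqP cardS].
rewrite addnS in cardS.
have Hk' : (t + k <= p.+1)%N by rewrite addnS in Hk; exact: ltnW.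
have tk2 : (2 <= t + k)%N by apply: leq_trans t2 (leq_addr _ _).
rewrite /= (sum_del _ cS cardS).
rewrite !addnS (subSn tk2) !factS !natrM -[_ * _ / _]mulrA -[_ * _ / ((t - 2)`!)%:R]mulrA.
rewrite -[((t + k).+1)%:R]natr1 -[((t + k - 2).+1)%:R]natr1 (natrB _ tk2).
set F := ((t + k)`!)%:R / (t`!)%:R; set G := ((t + k - 2)`!)%:R / ((t - 2)`!)%:R.
set B := 1 - (t + k)%:R * beta; set A := (1 - t%:R * beta) * F.
have HIH : forall v, v \in S -> A + (Dminus e beta p (S :\ v) - B) * G <= phi_rec e beta p t k (S :\ v).
  move=> v vS; apply: IH => //; rewrite inE card_del // cardS /= eqxx andbT.
  apply: clique_sub cS; exact: subsetDl.
apply: le_trans (ler_sum _ HIH).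
rewrite big_split /= sumr_const.
under eq_bigr do rewrite mulrBl.
rewrite sumrB -mulr_suml sumr_const.
have G0 : 0 <= G by rewrite divr_ge0.
have s2 : (2 <= #|S|)%N by rewrite cardS; apply: leq_trans tk2 _.
have K := key cS s2; rewrite cardS in K.
rewrite -[((t + k).+1)%:R]natr1 in K.
rewrite cardS -[A *+ _]mulr_natr -[B * G *+ _]mulr_natr -[((t + k).+1)%:R]natr1.
set x := Dminus e beta p S; set X := \sum_(i in S) Dminus e beta p (S :\ i).
apply: (le_by (E := (X - (((t + k)%:R + 1 - 2) * x + 2 - ((t + k)%:R + 1) * beta)) * G)).
  by rewrite /A /B; myring.
by apply: mulr_ge0 => //; rewrite subr_ge0.
Qed.

Lemma part1 t s S : (2 <= t)%N -> (t < s)%N -> (s <= p.+1)%N -> S \in cliques e s ->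
  (1 - t%:R * beta) * ((s`!)%:R / (t`!)%:R)
  + (Dminus e beta p S - (1 - s%:R * beta)) * (((s - 2)`!)%:R / ((t - 2)`!)%:R)
  <= Phi e beta p t s S.
Proof.
move=> t2 ts sp HS.
have sE : (s = t + (s - t))%N by rewrite subnKC // ltnW.
rewrite /Phi le_min; apply/andP; split.
  have H := @phi_bound t (s - t) S t2; rewrite -sE in H; exact: H HS sp.
rewrite /varphi lerD2l; apply: ler_wpM2r; first by rewrite divr_ge0.
have cardS : #|S| = s by move: HS; rewrite inE => /andP [_ /eqP].
have Hx : Dminus e beta p S <= (p%:R - s%:R + 1) * beta by rewrite /Dminus cardS ge_min lexx orbT.
apply: (le_by (E := (p%:R - s%:R + 1) * beta - Dminus e beta p S)); last by rewrite subr_ge0.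
by rewrite -[(p.+1)%:R]natr1; myring.
Qed.

Lemma part2 t : (2 <= t)%N -> (t <= p)%N ->
     ((1 - t%:R * beta) * ((p.+1`!)%:R / (t`!)%:R)
      - (1 - (p.+1)%:R * beta) * (((p - 1)`!)%:R / ((t - 2)`!)%:R))
     * (#|cliques e p.+1|)%:R
     <= \sum_(S in cliques e p.+1) Phi e beta p t p.+1 S.
Proof.
move=> t2 tp.
rewrite mulr_natr -sumr_const; apply: ler_sum => S HS.
apply: le_trans (part1 t2 _ (leqnn _) HS); last by [].
have cardS : #|S| = p.+1 by move: HS; rewrite inE => /andP [_ /eqP].
have -> : Dminus e beta p S = 0.
  have z : (p%:R - (p.+1)%:R + 1) = 0 :> R by rewrite -[(p.+1)%:R]natr1; myring.
  by rewrite /Dminus cardS z mul0r min_r // Dn_ge0.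
rewrite subSS sub0r mulNr; exact: lexx.
Qed.

Lemma main_sec :
  (forall t s : nat, (2 <= t)%N -> (t < s)%N -> (s <= p.+1)%N ->
     forall S, S \in cliques e s ->
       (1 - t%:R * beta) * ((s`!)%:R / (t`!)%:R)
       + (Dminus e beta p S - (1 - s%:R * beta))
           * (((s - 2)`!)%:R / ((t - 2)`!)%:R)
       <= Phi e beta p t s S)
  /\
  (forall t : nat, (2 <= t)%N -> (t <= p)%N ->
     ((1 - t%:R * beta) * ((p.+1`!)%:R / (t`!)%:R)
      - (1 - (p.+1)%:R * beta) * (((p - 1)`!)%:R / ((t - 2)`!)%:R))
     * (#|cliques e p.+1|)%:R
     <= \sum_(S in cliques e p.+1) Phi e beta p t p.+1 S).
Proof.
split; first by move=> t s t2 ts sp S HS; exact: part1.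
exact: part2.
Qed.
End Real.

Unset Implicit Arguments.

Theorem mainTheorem17 (R : archiRealFieldType) (beta : R) (p : nat)
  (T : finType) (e : rel T) :
  0 < beta -> beta < 1 ->
  (p%:Z = Num.ceil (beta^-1) - 1)%R ->
  simple_graph e ->
  (* minimum degree of G equals (1 - beta) n, n = #|T| *)
  (forall v : T, (1 - beta) * (#|T|)%:R <= (vdeg e v)%:R) ->
  (exists v : T, (vdeg e v)%:R = (1 - beta) * (#|T|)%:R) ->
  (forall t s : nat, (2 <= t)%N -> (t < s)%N -> (s <= p.+1)%N ->
     forall S, S \in cliques e s ->
       (1 - t%:R * beta) * ((s`!)%:R / (t`!)%:R)
       + (Dminus e beta p S - (1 - s%:R * beta))
           * (((s - 2)`!)%:R / ((t - 2)`!)%:R)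
       <= Phi e beta p t s S)
  /\
  (forall t : nat, (2 <= t)%N -> (t <= p)%N ->
     ((1 - t%:R * beta) * ((p.+1`!)%:R / (t`!)%:R)
      - (1 - (p.+1)%:R * beta) * (((p - 1)`!)%:R / ((t - 2)`!)%:R))
     * (#|cliques e p.+1|)%:R
     <= \sum_(S in cliques e p.+1) Phi e beta p t p.+1 S).
Proof.
move=> hb hb1 hc [esym eirr] hdeg [v _].
have hn : (0 < #|T|)%N by apply/card_gt0P; exists v.
have hp : 1 <= (p.+1)%:R * beta.
  have c : Num.ceil (beta^-1) = (p.+1)%:Z by rewrite -addn1 PoszD hc subrK.
  have := ceil_ge (beta^-1); rewrite c /= => H.
  rewrite -[X in X <= _](mulVf (lt0r_neq0 hb)); apply: ler_wpM2r; [exact: ltW | exact: H].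
by apply: main_sec.
Qed.
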